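(* Let $\mathbf{w},\mathbf{v}\in\mathbb{R}^d$ be nonzero with $\theta_{\mathbf{w},\mathbf{v}}\in(0,\pi)$, and let \[ h_1(\mathbf{w},\mathbf{v})=\frac{\sin(\theta_{\mathbf{w},\mathbf{v}})\|\mathbf{v}\|}{2\pi\|\mathbf{w}\|}\left(I-\bar{\mathbf{w}}\bar{\mathbf{w}}^\top+\bar{\mathbf{n}}_{\mathbf{v},\mathbf{w}}\bar{\mathbf{n}}_{\mathbf{v},\mathbf{w}}^\top\right),\qquad h_2(\mathbf{w},\mathbf{v})=\frac{1}{2\pi}\left((\pi-\theta_{\mathbf{w},\mathbf{v}})I+\bar{\mathbf{n}}_{\mathbf{w},\mathbf{v}}\bar{\mathbf{v}}^\top+\bar{\mathbf{n}}_{\mathbf{v},\mathbf{w}}\bar{\mathbf{w}}^\top\right). \] Then $\|h_1(\mathbf{w},\mathbf{v})\|_{\mathrm{sp}}=\frac{\sin(\theta_{\mathbf{w},\mathbf{v}})\|\mathbf{v}\|}{\pi\|\mathbf{w}\|}$ and $\|h_2(\mathbf{w},\mathbf{v})\|_{\mathrm{sp}}=\frac{1}{2\pi}\left(\pi-\theta_{\mathbf{w},\mathbf{v}}+\sin(\theta_{\mathbf{w},\mathbf{v}})\right)$.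
   Context: Norms on vectors are Euclidean; $\|\cdot\|_{\mathrm{sp}}$ is the spectral norm. $\bar{\mathbf{w}}=\mathbf{w}/\|\mathbf{w}\|$; $\theta_{\mathbf{w},\mathbf{v}}=\arccos\left(\frac{\mathbf{w}^\top\mathbf{v}}{\|\mathbf{w}\|\|\mathbf{v}\|}\right)$; $\mathbf{n}_{\mathbf{v},\mathbf{w}}=\bar{\mathbf{v}}-\cos(\theta_{\mathbf{v},\mathbf{w}})\bar{\mathbf{w}}$ and $\bar{\mathbf{n}}_{\mathbf{v},\mathbf{w}}=\mathbf{n}_{\mathbf{v},\mathbf{w}}/\|\mathbf{n}_{\mathbf{v},\mathbf{w}}\|$ (similarly $\bar{\mathbf{n}}_{\mathbf{w},\mathbf{v}}$ with roles swapped). *)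

(* Defs.v *)
From HB Require Import structures.
From mathcomp Require Import all_boot all_order all_algebra.
From mathcomp Require Import all_classical all_reals all_analysis.
Set Implicit Arguments. Unset Strict Implicit. Unset Printing Implicit Defensive.
Import Order.TTheory GRing.Theory Num.Theory.
Local Open Scope ring_scope.
Local Open Scope classical_set_scope.

Section Defs.
Variables (R : realType) (d : nat).

Definition vdot (u v : 'cV[R]_d) : R := \sum_(i < d) u i 0 * v i 0.
Definition vnorm (u : 'cV[R]_d) : R := Num.sqrt (vdot u u).

Definition specnorm (A : 'M[R]_d) : R :=
  sup [set vnorm (A *m x) | x in [set x : 'cV[R]_d | vnorm x = 1]].

Definition vbar (w : 'cV[R]_d) : 'cV[R]_d := (vnorm w)^-1 *: w.

Definition vangle (w v : 'cV[R]_d) : R := acos (vdot w v / (vnorm w * vnorm v)).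

Definition nvec (v w : 'cV[R]_d) : 'cV[R]_d := vbar v - cos (vangle v w) *: vbar w.
Definition nbar (v w : 'cV[R]_d) : 'cV[R]_d := (vnorm (nvec v w))^-1 *: nvec v w.

Definition h1 (w v : 'cV[R]_d) : 'M[R]_d :=
  (sin (vangle w v) * vnorm v / (2 * pi * vnorm w)) *:
    (1%:M - vbar w *m (vbar w)^T + nbar v w *m (nbar v w)^T).

Definition h2 (w v : 'cV[R]_d) : 'M[R]_d :=
  (2 * pi)^-1 *:
    ((pi - vangle w v)%:M + nbar w v *m (vbar v)^T + nbar v w *m (vbar w)^T).

End Defs.

(* Main.v *)
Require Import Defs.
From HB Require Import structures.
From mathcomp Require Import all_boot all_order all_algebra.
From mathcomp Require Import all_classical all_reals all_analysis.
From mathcomp Require Import ring lra.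
Import Order.TTheory GRing.Theory Num.Theory.
Local Open Scope ring_scope.

Section Aux.
Context {R : realType} {d : nat}.
Implicit Types (u v x a b : 'cV[R]_d).

Lemma vdotC u v : vdot u v = vdot v u.
Proof. by rewrite /vdot; apply: eq_bigr => i _; rewrite mulrC. Qed.

Lemma vdotDl u v x : vdot (u + v) x = vdot u x + vdot v x.
Proof. by rewrite /vdot -big_split; apply: eq_bigr => i _; rewrite !mxE mulrDl. Qed.

Lemma vdotZl (k : R) u x : vdot (k *: u) x = k * vdot u x.
Proof. by rewrite /vdot mulr_sumr; apply: eq_bigr => i _; rewrite !mxE mulrA. Qed.

Lemma vdotNl u x : vdot (- u) x = - vdot u x.
Proof. by rewrite -scaleN1r vdotZl mulN1r. Qed.

Lemma vdotBl u v x : vdot (u - v) x = vdot u x - vdot v x.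
Proof. by rewrite vdotDl vdotNl. Qed.

Lemma vdotDr u v x : vdot x (u + v) = vdot x u + vdot x v.
Proof. by rewrite vdotC vdotDl !(vdotC x). Qed.
Lemma vdotZr (k : R) u x : vdot x (k *: u) = k * vdot x u.
Proof. by rewrite vdotC vdotZl (vdotC x). Qed.
Lemma vdotBr u v x : vdot x (u - v) = vdot x u - vdot x v.
Proof. by rewrite vdotC vdotBl !(vdotC x). Qed.

Lemma vdotNr u x : vdot x (- u) = - vdot x u.
Proof. by rewrite vdotC vdotNl vdotC. Qed.

Lemma vdot_ge0 u : 0 <= vdot u u.
Proof. by apply: sumr_ge0 => i _; rewrite -expr2 sqr_ge0. Qed.

Lemma vdot_eq0 u : vdot u u = 0 -> u = 0.
Proof.
move=> /eqP; rewrite psumr_eq0; last by move=> i _; rewrite -expr2 sqr_ge0.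
move=> /allP H; apply/matrixP => i j; rewrite ord1 mxE.
by have := H i (mem_index_enum _); rewrite -expr2 sqrf_eq0 => /eqP.
Qed.

Lemma vnorm_sqr u : vnorm u ^+ 2 = vdot u u.
Proof. by rewrite /vnorm sqr_sqrtr // vdot_ge0. Qed.

Lemma vnorm_gt0 u : u != 0 -> 0 < vnorm u.
Proof.
move=> u0; rewrite /vnorm sqrtr_gt0 lt_def vdot_ge0 andbT.
by apply/eqP => /vdot_eq0 /eqP; rewrite (negbTE u0).
Qed.

Lemma outer_mul u v x : (u *m v^T) *m x = vdot v x *: u.
Proof.
rewrite -mulmxA.
have -> : v^T *m x = (vdot v x)%:M.
  apply/matrixP => i j; rewrite !ord1 !mxE /vdot; apply: eq_bigr => k _.
  by rewrite !mxE.
by rewrite mul_mx_scalar.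
Qed.

Lemma sup_eq (E : set R) (B : R) : E B -> (forall y, E y -> y <= B) -> sup E = B.
Proof.
move=> EB ub; apply/le_anti/andP; split.
  by apply: ge_sup; [exists B | move=> y /ub].
by apply: ub_le_sup => //; exists B => y /ub.
Qed.

Lemma specnorm_eq (A : 'M[R]_d) (B : R) : 0 <= B ->
  (exists x0, vdot x0 x0 = 1 /\ vdot (A *m x0) (A *m x0) = B ^+ 2) ->
  (forall x, vdot x x = 1 -> vdot (A *m x) (A *m x) <= B ^+ 2) ->
  specnorm A = B.
Proof.
move=> B0 [x0 [x01 Ax0]] ub; apply: sup_eq.
  exists x0; first by rewrite /= /vnorm x01 sqrtr1.
  by rewrite /vnorm Ax0 sqrtr_sqr ger0_norm.
move=> y [x /= xn <-].
have x1 : vdot x x = 1 by rewrite -vnorm_sqr xn expr1n.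
by rewrite /vnorm -(ger0_norm B0) -sqrtr_sqr ler_sqrt ?ub // sqr_ge0.
Qed.

End Aux.

Ltac vexp := rewrite ?(vdotDl, vdotBl, vdotZl, vdotDr, vdotBr, vdotZr, vdotNl, vdotNr).

Section Gen.
Context {R : realType} {d : nat}.
Implicit Types (u v x a b : 'cV[R]_d).


Lemma bessel a b x : vdot a a = 1 -> vdot b b = 1 -> vdot a b = 0 ->
  vdot a x ^+ 2 + vdot b x ^+ 2 <= vdot x x.
Proof.
move=> aa bb ab.
have := vdot_ge0 (x - vdot a x *: a - vdot b x *: b).
vexp; rewrite ?(vdotC b a) ?(vdotC x a) ?(vdotC x b) ?aa ?bb ?ab.
move=> H. nra.
Qed.

Lemma spec1 a b (K : R) : vdot a a = 1 -> vdot b b = 1 -> vdot a b = 0 -> 0 < K ->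
  specnorm (K *: (1%:M - a *m a^T + b *m b^T)) = 2 * K.
Proof.
move=> aa bb ab K0.
have Ax x : (K *: (1%:M - a *m a^T + b *m b^T)) *m x
    = K *: (x - vdot a x *: a + vdot b x *: b).
  by rewrite -scalemxAl mulmxDl mulmxBl mul1mx !outer_mul.
have ba : vdot b a = 0 by rewrite vdotC.
apply: specnorm_eq; first lra.
  exists b; split => //; rewrite Ax; vexp.
  rewrite ?aa ?bb ?ab ?ba; lra.
move=> x xx; have := @bessel a b x aa bb ab; rewrite Ax xx; vexp.
rewrite ?(vdotC x a) ?(vdotC x b) ?aa ?bb ?ab ?ba ?xx => H.
have H1 : vdot b x ^+ 2 <= 1 by nra.
nra.
Qed.

End Gen.

Section Gen2.
Context {R : realType} {d : nat}.
Implicit Types (u v x a b : 'cV[R]_d).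


Lemma spec2 a b (s c m k : R) : vdot a a = 1 -> vdot b b = 1 -> vdot a b = 0 ->
  0 < s -> s ^+ 2 + c ^+ 2 = 1 -> 0 < m -> 0 < k ->
  specnorm (k *: (m%:M + (s *: a - c *: b) *m (c *: a + s *: b)^T + b *m a^T))
    = k * (m + s).
Proof.
move=> aa bb ab s0 scs m0 k0.
have ba : vdot b a = 0 by rewrite vdotC.
have e0 : s ^+ 2 + c ^+ 2 - 1 = 0 by rewrite scs subrr.
set e := s ^+ 2 + c ^+ 2 - 1 in e0.
have Ax x : (k *: (m%:M + (s *: a - c *: b) *m (c *: a + s *: b)^T + b *m a^T)) *m x
    = k *: (m *: x + vdot (c *: a + s *: b) x *: (s *: a - c *: b) + vdot a x *: b).
  set u := s *: a - c *: b.
  by rewrite -scalemxAl !mulmxDl mul_scalar_mx !outer_mul /u !scalerDr !addrA.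
have E x : vdot (k *: (m *: x + vdot (c *: a + s *: b) x *: (s *: a - c *: b) + vdot a x *: b))
             (k *: (m *: x + vdot (c *: a + s *: b) x *: (s *: a - c *: b) + vdot a x *: b))
   = k ^+ 2 * (m ^+ 2 * vdot x x
       + 2 * m * s * (c * vdot a x ^+ 2 + 2 * s * vdot a x * vdot b x - c * vdot b x ^+ 2)
       + s ^+ 2 * (vdot a x ^+ 2 + vdot b x ^+ 2))
     + e * (k ^+ 2 * ((c * vdot a x + s * vdot b x) ^+ 2 - vdot a x ^+ 2
                      - 2 * m * vdot a x * vdot b x)).
  vexp; rewrite ?(vdotC x a) ?(vdotC x b) ?aa ?bb ?ab ?ba /e; ring.
have c1 : c < 1 by nra.
apply: specnorm_eq; first by apply: mulr_ge0; lra.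
  pose t := 2 - 2 * c.
  have t0 : 0 < t by rewrite /t; lra.
  pose r := (Num.sqrt t)^-1.
  have r2 : r ^+ 2 * t = 1.
    by rewrite /r exprVn sqr_sqrtr ?mulVf //; lra.
  pose x0 := r *: (s *: a + (1 - c) *: b).
  have ax : vdot a x0 = r * s.
    by rewrite /x0; vexp; rewrite aa ab; ring.
  have bx : vdot b x0 = r * (1 - c).
    by rewrite /x0; vexp; rewrite bb ba; ring.
  have xx : vdot x0 x0 = 1.
    rewrite /x0; vexp; rewrite aa bb ab ba.
    transitivity (r ^+ 2 * t + e * r ^+ 2); last by rewrite e0 r2; ring.
    rewrite /e /t; ring.
  exists x0; split => //; rewrite Ax E e0 mul0r addr0 ax bx xx.
  have Q : c * (r * s) ^+ 2 + 2 * s * (r * s) * (r * (1 - c)) - c * (r * (1 - c)) ^+ 2 = 1.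
    transitivity (r ^+ 2 * t + e * r ^+ 2 * (2 - c)); last by rewrite e0 r2; ring.
    rewrite /e /t; ring.
  have P : (r * s) ^+ 2 + (r * (1 - c)) ^+ 2 = 1.
    transitivity (r ^+ 2 * t + e * r ^+ 2); last by rewrite e0 r2; ring.
    rewrite /e /t; ring.
  rewrite Q P; ring.
move=> x xx; rewrite Ax E e0 mul0r addr0 xx.
have B := @bessel _ _ a b x aa bb ab; rewrite xx in B.
set al := vdot a x in B *; set be := vdot b x in B *.
have Qle : c * al ^+ 2 + 2 * s * al * be - c * be ^+ 2 <= 1.
  have id : 2 * (al ^+ 2 + be ^+ 2 - (c * al ^+ 2 + 2 * s * al * be - c * be ^+ 2))
     = (s * al - (1 + c) * be) ^+ 2 + ((1 - c) * al - s * be) ^+ 2 - e * (al ^+ 2 + be ^+ 2).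
    rewrite /e; ring.
  rewrite e0 mul0r subr0 in id.
  have := sqr_ge0 (s * al - (1 + c) * be); have := sqr_ge0 ((1 - c) * al - s * be).
  lra.
have H : m ^+ 2 * 1 + 2 * m * s * (c * al ^+ 2 + 2 * s * al * be - c * be ^+ 2)
   + s ^+ 2 * (al ^+ 2 + be ^+ 2) <= (m + s) ^+ 2.
  have ms : 0 < m * s by apply: mulr_gt0.
  nra.
rewrite exprMn; apply: ler_wpM2l => //; apply: sqr_ge0.
Qed.

End Gen2.

Theorem lemma9 (R : realType) (d : nat) (w v : 'cV[R]_d) :
  w != 0 -> v != 0 -> 0 < vangle w v < pi ->
  specnorm (h1 w v) = sin (vangle w v) * vnorm v / (pi * vnorm w) /\
  specnorm (h2 w v) = (2 * pi)^-1 * (pi - vangle w v + sin (vangle w v)).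
Proof.
move=> w0 v0 th.
have nw := @vnorm_gt0 R d w w0; have nv := @vnorm_gt0 R d v v0.
have unit (z : 'cV[R]_d) : z != 0 -> vdot (vbar z) (vbar z) = 1.
  move=> z0; have := @vnorm_gt0 R d z z0; rewrite /vbar; vexp; rewrite -vnorm_sqr => zp.
  by field; rewrite gt_eqF.
have aa : vdot (vbar w) (vbar w) = 1 by apply: unit.
have uu : vdot (vbar v) (vbar v) = 1 by apply: unit.
remember (vbar w) as a eqn:ha; remember (vbar v) as u eqn:hu.
set c := vdot a u.
have c2 : c ^+ 2 <= 1.
  have := vdot_ge0 (u - c *: a); vexp; rewrite ?(vdotC u a) aa uu -/c; nra.
have cin : c \in `[-1, 1].
  rewrite in_itv /=; apply/andP; split; nra.
have Hvw : vangle w v = acos c.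
  rewrite /vangle /c ha hu /vbar; vexp; congr acos.
  by field; apply/andP; split; rewrite gt_eqF.
have Hwv : vangle v w = acos c.
  by rewrite -Hvw /vangle vdotC [vnorm v * _]mulrC.
rewrite Hvw in th *.
have cc : cos (acos c) = c by apply: acosK.
set s := sin (acos c).
have s0 : 0 < s by apply: sin_gt0_pi.
have scs : s ^+ 2 + c ^+ 2 = 1 by rewrite addrC -{1}cc cos2Dsin2.
have e0 : s ^+ 2 + c ^+ 2 - 1 = 0 by rewrite scs subrr.
have nvw : nvec v w = u - c *: a by rewrite /nvec Hwv cc ha hu.
have nwv : nvec w v = a - c *: u by rewrite /nvec Hvw cc ha hu.
have nn1 : vdot (u - c *: a) (u - c *: a) = s ^+ 2.
  vexp; rewrite ?(vdotC u a) aa uu -/c; lra.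
have nn2 : vdot (a - c *: u) (a - c *: u) = s ^+ 2.
  vexp; rewrite ?(vdotC u a) aa uu -/c; lra.
have nnvw : vnorm (nvec v w) = s.
  by rewrite /vnorm nvw nn1 sqrtr_sqr gtr0_norm.
have nnwv : vnorm (nvec w v) = s.
  by rewrite /vnorm nwv nn2 sqrtr_sqr gtr0_norm.
have bdef : nbar v w = s^-1 *: (u - c *: a) by rewrite /nbar nnvw nvw.
remember (nbar v w) as b eqn:hb.
have bdef2 : b = s^-1 *: (u - c *: a) by exact: bdef.
have bb : vdot b b = 1.
  rewrite bdef2 vdotZl vdotZr nn1.
  by field; rewrite gt_eqF.
have ab : vdot a b = 0.
  rewrite bdef2; vexp; rewrite aa -/c; ring.
have ueq : u = c *: a + s *: b.
  apply/matrixP => p q; rewrite bdef2 !mxE; by field; rewrite gt_eqF.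
have nbwv : nbar w v = s *: a - c *: b.
  rewrite /nbar nnwv nwv bdef2; apply/matrixP => i0 j0; rewrite !mxE.
  apply: subr0_eq.
  transitivity ((s ^+ 2 + c ^+ 2 - 1) * (- (s^-1 * a i0 j0))); last by rewrite e0 mul0r.
  by field; rewrite gt_eqF.
have pi0 := pi_gt0 R.
split.
  rewrite /h1 Hvw -ha -hb -/s spec1 //; last first.
    by apply: divr_gt0; [apply: mulr_gt0 | apply: mulr_gt0; [apply: mulr_gt0|]].
  have key : forall P : R, 0 < P -> 2 * (s * vnorm v / (2 * P * vnorm w)) = s * vnorm v / (P * vnorm w).
    by move=> P P0; field; rewrite !gt_eqF.
  exact: key.
rewrite /h2 Hvw -ha -/s -hu nbwv ueq -hb spec2 //; try lra.
  by rewrite invr_gt0; apply: mulr_gt0.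
Qed.
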